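(* Let $S$ be a finite non-empty set and $\Sigma\subseteq\mathbb{R}_+\times S$ locally finite, and let $(X_n,\eta_n)$ be a time-homogeneous irreducible Markov chain on $\Sigma$ such that every line $\Lambda_k=\{x:(x,k)\in\Sigma\}$ is unbounded. Suppose that for some $p>2$ there is $C_p<\infty$ with $\mathbb{E}_{x,i}[|X_{n+1}-X_n|^p]\le C_p$ for all $(x,i)\in\Sigma$, and assume conditions (Q$_G$) and (D$_G$). Let $(a_i)_{i\in S}$ with $a_i\ge0$ for all $i$ be a solution of $d_i+\sum_{j\in S}(a_j-a_i)q_{ij}=0$ for all $i\in S$. Let $\widetilde X_n:=X_n+a_{\eta_n}$ and define $\widetilde\mu_i(y)=\mathbb{E}[\widetilde X_{n+1}-\widetilde X_n\mid\widetilde X_n=y,\eta_n=i]$, $\widetilde\sigma_i^2(y)=\mathbb{E}[(\widetilde X_{n+1}-\widetilde X_n)^2\mid\widetilde X_n=y,\eta_n=i]$. Either (i) set $\delta_4=0$; or (ii) suppose in addition that (Q$_G^+$) and (D$_G^+$) hold and set $\delta_4=\delta_2\wedge\delta_3\in(0,1)$. For $i\in S$ define \[c_i:=e_i+\sum_{j\in S}a_j\gamma_{ij},\qquad s_i^2:=t_i^2+2\sum_{j\in S}a_jd_{ij}+\sum_{j\in S}(a_j^2-a_i^2)q_{ij}.\] Then, as $x\to\infty$, $\widetilde\mu_i(x)=\frac{c_i}x+o(x^{-1-\delta_4})$ and $\widetilde\sigma_i^2(x)=s_i^2+o(x^{-\delta_4})$.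
   Context: Locally finite means $\Sigma\cap([0,r]\times S)$ is finite for every $r\ge0$. Write $\mathbb{E}_{x,i}[\cdot]=\mathbb{E}[\cdot\mid X_n=x,\eta_n=i]$, $q_{ij}(x)=\Pr[\eta_{n+1}=j\mid X_n=x,\eta_n=i]$, $\mu_i(x)=\mathbb{E}_{x,i}[X_{n+1}-X_n]$, $\sigma_i^2(x)=\mathbb{E}_{x,i}[(X_{n+1}-X_n)^2]$, $\mu_{ij}(x)=\mathbb{E}_{x,i}[(X_{n+1}-X_n)\mathbf 1\{\eta_{n+1}=j\}]$. (Q$_G$): there are $\gamma_{ij}\in\mathbb{R}$ with $q_{ij}(x)=q_{ij}+\gamma_{ij}/x+o(x^{-1})$ as $x\to\infty$, where $(q_{ij})$ is an irreducible stochastic matrix with stationary distribution $\pi$. (D$_G$): there are $d_i,e_i,d_{ij}\in\mathbb{R}$ and $t_i^2\ge0$ with at least one $t_i^2\ne0$, such that as $x\to\infty$: $\mu_i(x)=d_i+e_i/x+o(x^{-1})$, $\sigma_i^2(x)=t_i^2+o(1)$, $\mu_{ij}(x)=d_{ij}+o(1)$ for all $i,j$, and $\sum_i\pi_id_i=0$. (Q$_G^+$): there is $\delta_3\in(0,1)$ with $q_{ij}(x)=q_{ij}+\gamma_{ij}/x+o(x^{-1-\delta_3})$. (D$_G^+$): there is $\delta_2\in(0,1)$ with $\mu_i(x)=d_i+e_i/x+o(x^{-1-\delta_2})$, $\sigma_i^2(x)=t_i^2+o(x^{-\delta_2})$, $\mu_{ij}(x)=d_{ij}+o(x^{-\delta_2})$.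 *)

(* Defs.v *)
From mathcomp Require Import all_boot all_order all_algebra.
From mathcomp Require Import all_classical all_reals all_analysis.
Set Implicit Arguments. Unset Strict Implicit. Unset Printing Implicit Defensive.
Import Order.TTheory GRing.Theory Num.Theory.
Local Open Scope classical_set_scope.
Local Open Scope ring_scope.

Section Defs.
Context {R : realType} {S : finType}.

(* A one-step transition trkernel of a time-homogeneous Markov chain on a
   subset of R x S: from state (x,i), K x i j is the (sub-probability)
   measure describing "X_{n+1} in . and eta_{n+1} = j". *)
Definition trkernel := R -> S -> S -> {measure set R -> \bar R}.

Definition line (Sigma : set (R * S)) (k : S) : set R := [set x | Sigma (x, k)].

Definition in_Rplus_S (Sigma : set (R * S)) := forall u, Sigma u -> 0 <= u.1.

Definition locally_finite (Sigma : set (R * S)) :=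
  forall r : R, 0 <= r -> finite_set (Sigma `&` [set u | 0 <= u.1 <= r]).

Definition kernel_on (Sigma : set (R * S)) (K : trkernel) :=
  forall x i, Sigma (x, i) ->
    (\sum_(j : S) K x i j setT = 1)%E /\
    (forall j, K x i j (~` line Sigma j) = 0%E).

Definition step (K : trkernel) (u v : R * S) := (0 < K u.1 u.2 v.2 [set v.1])%E.

Definition irreducible_chain (Sigma : set (R * S)) (K : trkernel) :=
  forall u v, Sigma u -> Sigma v ->
    exists (n : nat) (w : nat -> R * S), w 0%N = u /\ w n = v /\
      (forall k, (k <= n)%N -> Sigma (w k)) /\
      (forall k, (k < n)%N -> step K (w k) (w k.+1)).

Definition unbounded_lines (Sigma : set (R * S)) :=
  forall k M, exists x, line Sigma k x /\ M < x.

Definition qx (K : trkernel) x i j : R := fine (K x i j setT).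
Definition mux (K : trkernel) x i : R :=
  \sum_(j : S) Rintegral (K x i j) setT (fun y => y - x).
Definition sig2x (K : trkernel) x i : R :=
  \sum_(j : S) Rintegral (K x i j) setT (fun y => (y - x) ^+ 2).
Definition muijx (K : trkernel) x i j : R :=
  Rintegral (K x i j) setT (fun y => y - x).

Definition pmoment_bound (Sigma : set (R * S)) (K : trkernel) (p Cp : R) :=
  forall x i, Sigma (x, i) ->
    (\sum_(j : S) \int[K x i j]_(y in setT) (`|y - x| `^ p)%:E <= Cp%:E)%E.

Definition o_infty (A : set R) (f g : R -> R) :=
  forall eps : R, 0 < eps ->
    exists x0 : R, forall x, A x -> x0 <= x -> `|f x| <= eps * g x.

Fixpoint qpow (q : S -> S -> R) (n : nat) (i j : S) : R :=
  match n with
  | 0%N => (i == j)%:R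
  | n'.+1 => \sum_(k : S) qpow q n' i k * q k j
  end.

Definition stochastic (q : S -> S -> R) :=
  (forall i j, 0 <= q i j) /\ (forall i, \sum_(j : S) q i j = 1).

Definition irreducible_matrix (q : S -> S -> R) :=
  forall i j, exists n, 0 < qpow q n i j.

Definition stationary (q : S -> S -> R) (pi : S -> R) :=
  (forall i, 0 <= pi i) /\ (\sum_(i : S) pi i = 1) /\
  (forall j, \sum_(i : S) pi i * q i j = pi j).

(* (Q_G) with remainder o(x^{-1-delta}); delta = 0 gives (Q_G),
   delta = delta3 gives (Q_G^+) *)
Definition QG_rate (Sigma : set (R * S)) (K : trkernel) (q gamma : S -> S -> R)
    (delta : R) :=
  forall i j, o_infty (line Sigma i)
    (fun x => qx K x i j - q i j - gamma i j / x) (fun x => x `^ (- 1 - delta)).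

(* (D_G) asymptotics with remainder rates; delta = 0 gives (D_G),
   delta = delta2 gives (D_G^+) *)
Definition DG_rate (Sigma : set (R * S)) (K : trkernel) (d e t2 : S -> R)
    (dd : S -> S -> R) (delta : R) :=
  forall i,
    o_infty (line Sigma i) (fun x => mux K x i - d i - e i / x)
      (fun x => x `^ (- 1 - delta)) /\
    o_infty (line Sigma i) (fun x => sig2x K x i - t2 i) (fun x => x `^ (- delta)) /\
    (forall j, o_infty (line Sigma i) (fun x => muijx K x i j - dd i j)
      (fun x => x `^ (- delta))).

(* the non-asymptotic parts of (D_G) *)
Definition DG_struct (pi d t2 : S -> R) :=
  (forall i, 0 <= t2 i) /\ (exists i, t2 i != 0) /\ \sum_(i : S) pi i * d i = 0.

(* transformed process  Xtilde_n = X_n + a_{eta_n}: conditional moments given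
   Xtilde_n = y, eta_n = i, i.e. X_n = y - a_i, eta_n = i *)
Definition mutilde (K : trkernel) (a : S -> R) y i : R :=
  \sum_(j : S) Rintegral (K (y - a i) i j) setT (fun z => (z + a j) - y).
Definition sig2tilde (K : trkernel) (a : S -> R) y i : R :=
  \sum_(j : S) Rintegral (K (y - a i) i j) setT (fun z => ((z + a j) - y) ^+ 2).

Definition tline (Sigma : set (R * S)) (a : S -> R) i : set R :=
  [set y | Sigma (y - a i, i)].

Definition c_coef (e a : S -> R) (gamma : S -> S -> R) i : R :=
  e i + \sum_(j : S) a j * gamma i j.
Definition s2_coef (t2 a : S -> R) (dd q : S -> S -> R) i : R :=
  t2 i + 2 * \sum_(j : S) a j * dd i j + \sum_(j : S) (a j ^+ 2 - a i ^+ 2) * q i j.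

Definition conclusion (Sigma : set (R * S)) (K : trkernel) (a e t2 : S -> R)
    (q gamma dd : S -> S -> R) (delta4 : R) :=
  forall i,
    o_infty (tline Sigma a i)
      (fun y => mutilde K a y i - c_coef e a gamma i / y)
      (fun y => y `^ (- 1 - delta4)) /\
    o_infty (tline Sigma a i)
      (fun y => sig2tilde K a y i - s2_coef t2 a dd q i)
      (fun y => y `^ (- delta4)).

End Defs.

(* Main.v *)
Require Import Defs.
From mathcomp Require Import all_boot all_order all_algebra.
From mathcomp Require Import all_classical all_reals all_analysis.
From mathcomp Require Import measurable_realfun.
From mathcomp Require Import ring lra.
Import Order.TTheory GRing.Theory Num.Theory.
Local Open Scope classical_set_scope.
Local Open Scope ring_scope.

Section Integ.
Context {R : realType} {S : finType} (Sigma : set (R * S)) (K : @trkernel R S)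
  (p Cp : R).
Hypotheses (hK : kernel_on Sigma K) (hp : 2 < p)
  (hmom : pmoment_bound Sigma K p Cp).

Lemma ereal_term_le (f : S -> \bar R) j : (forall k, 0 <= f k)%E ->
  (f j <= (\sum_(k : S) f k)%R)%E.
Proof.
move=> f0; rewrite (bigD1 j) //=; apply: leeDl; exact: sume_ge0.
Qed.

Lemma Kfin x i j : Sigma (x, i) -> K x i j setT = (qx K x i j)%:E.
Proof.
move=> Hs; have [Hsum _] := hK x i Hs.
have le1 : (K x i j setT <= 1)%E.
  by rewrite -Hsum; apply: ereal_term_le => k; exact: measure_ge0.
rewrite /qx fineK // ge0_fin_numE ?measure_ge0 //.
exact: (le_lt_trans le1 (ltry _)).
Qed.

Lemma sum_qx x i : Sigma (x, i) -> \sum_(j : S) qx K x i j = 1.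
Proof.
move=> Hs; have [Hsum _] := hK x i Hs.
rewrite /qx sum_fine; first by rewrite Hsum.
by move=> j _; rewrite Kfin.
Qed.

Lemma mom_le x i j : Sigma (x, i) ->
  (\int[K x i j]_(y in setT) (`|y - x| `^ p)%:E <= Cp%:E)%E.
Proof.
move=> Hs; apply: le_trans (hmom x i Hs).
rewrite [X in (_ <= X)%E](bigD1 j) //=; apply: leeDl; apply: sume_ge0 => k _.
apply: integral_ge0 => y _; rewrite lee_fin; exact: powR_ge0.
Qed.

Lemma mpow x : measurable_fun setT (fun y : R => `|y - x| `^ p).
Proof.
apply: measurableT_comp (measurable_powR _) _.
apply: measurableT_comp => //; exact: measurable_funB.
Qed.

Lemma int_g x i j : Sigma (x, i) ->
  (K x i j).-integrable setT (fun y => (1 + `|y - x| `^ p)%:E).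
Proof.
move=> Hs; apply/integrableP; split.
  apply/measurable_EFinP; apply: measurable_funD => //; exact: mpow.
under eq_integral => y _ do rewrite gee0_abs ?lee_fin ?addr_ge0 ?powR_ge0 // EFinD.
rewrite ge0_integralD //; try (by move=> y _; rewrite lee_fin ?powR_ge0);
  try (by apply/measurable_EFinP; exact: mpow).
rewrite integral_cst // mul1e Kfin //.
apply: (@le_lt_trans _ _ ((qx K x i j)%:E + Cp%:E)%E).
  by apply: leeD => //; exact: mom_le.
by rewrite -EFinD ltry.
Qed.

Lemma bnd t r : 0 <= t -> 1 <= r -> r <= p -> t `^ r <= 1 + t `^ p.
Proof.
move=> t0 r1 rp; have := powR_ge0 t p => hp0.
have [t1|t1] := leP t 1.
  have : t `^ r <= 1 `^ r by apply: ge0_ler_powR => //; rewrite ?nnegrE //; lra.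
  rewrite powR1 => ?; lra.
have : t `^ r <= t `^ p by apply: ler_powR => //; lra.
lra.
Qed.

Lemma int1 x i j : Sigma (x, i) ->
  (K x i j).-integrable setT (EFin \o (fun z => z - x)).
Proof.
move=> Hs; apply: (le_integrable measurableT _ _ (int_g x i j Hs)).
  by apply/measurable_EFinP; exact: measurable_funB.
move=> y _ /=; rewrite lee_fin [X in _ <= X]ger0_norm ?addr_ge0 ?powR_ge0 //.
have p1 : 1 <= p by apply: le_trans (ltW hp); rewrite ler1n.
have := @bnd `|y - x| 1 (normr_ge0 _) (lexx _) p1.
by rewrite powRr1.
Qed.

Lemma int2 x i j : Sigma (x, i) ->
  (K x i j).-integrable setT (EFin \o (fun z => (z - x) ^+ 2)).
Proof.
move=> Hs; apply: (le_integrable measurableT _ _ (int_g x i j Hs)).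
  apply/measurable_EFinP; apply: measurable_funX; exact: measurable_funB.
move=> y _ /=; rewrite lee_fin [X in _ <= X]ger0_norm ?addr_ge0 ?powR_ge0 //.
have := @bnd `|y - x| 2 (normr_ge0 _) (ler1n _ 2) (ltW hp).
by rewrite powR_mulrn ?normr_ge0 // normrX.
Qed.

Lemma intc x i j (c : R) : Sigma (x, i) ->
  (K x i j).-integrable setT (EFin \o (fun _ => c)).
Proof.
move=> Hs; apply/integrableP; split; first exact/measurable_EFinP.
rewrite integral_cst //= Kfin // -EFinM; exact: ltry.
Qed.

Lemma muij_shift x i j c : Sigma (x, i) ->
  Rintegral (K x i j) setT (fun z => z - x + c) = muijx K x i j + c * qx K x i j.
Proof.
move=> Hs; rewrite RintegralD //; [|exact: int1|exact: intc].
by rewrite Rintegral_cst.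
Qed.

Lemma sq_shift x i j c : Sigma (x, i) ->
  Rintegral (K x i j) setT (fun z => (z - x + c) ^+ 2) =
  Rintegral (K x i j) setT (fun z => (z - x) ^+ 2) + 2 * c * muijx K x i j
  + c ^+ 2 * qx K x i j.
Proof.
move=> Hs.
have -> : Rintegral (K x i j) setT (fun z => (z - x + c) ^+ 2) =
  Rintegral (K x i j) setT (fun z => ((z - x) ^+ 2 + (2 * c) * (z - x)) + c ^+ 2).
  by apply: eq_Rintegral => z _; ring.
have i2c : (K x i j).-integrable setT (EFin \o (fun z => 2 * c * (z - x))).
  apply: (eq_integrable measurableT _ _ _ (integrableZl measurableT (2 * c) (int1 x i j Hs))).
  by move=> z _ /=; rewrite EFinM.
have iS : (K x i j).-integrable setT
    (EFin \o (fun z => (z - x) ^+ 2 + 2 * c * (z - x))).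
  apply: (eq_integrable measurableT _ _ _ (integrableD measurableT (int2 x i j Hs) i2c)).
  by move=> z _ /=; rewrite EFinD.
rewrite RintegralD //; last exact: intc.
rewrite RintegralD //; last exact: int2.
rewrite Rintegral_cst // RintegralZl //; last exact: int1.
Qed.

Lemma mutilde_eq (a : S -> R) y i : Sigma (y - a i, i) ->
  mutilde K a y i = mux K (y - a i) i + \sum_(j : S) (a j - a i) * qx K (y - a i) i j.
Proof.
move=> Hs; rewrite /mutilde /mux -big_split /=; apply: eq_bigr => j _.
transitivity (muijx K (y - a i) i j + (a j - a i) * qx K (y - a i) i j); last by [].
rewrite -muij_shift //; apply: eq_Rintegral => z _; ring.
Qed.

Lemma sig2tilde_eq (a : S -> R) y i : Sigma (y - a i, i) ->
  sig2tilde K a y i = sig2x K (y - a i) i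
    + 2 * \sum_(j : S) (a j - a i) * muijx K (y - a i) i j
    + \sum_(j : S) (a j - a i) ^+ 2 * qx K (y - a i) i j.
Proof.
move=> Hs; rewrite /sig2tilde /sig2x mulr_sumr -!big_split /=; apply: eq_bigr => j _.
rewrite (_ : Rintegral _ _ _ = Rintegral (K (y - a i) i j) setT
   (fun z => (z - (y - a i) + (a j - a i)) ^+ 2)); last first.
  by apply: eq_Rintegral => z _; congr (_ ^+ 2); ring.
rewrite sq_shift //; ring.
Qed.

End Integ.

Section Asym.
Set Implicit Arguments. Unset Strict Implicit.
Context {R : realType}.
Implicit Types (A : set R) (f g h : R -> R).

Definition ev A (P : R -> Prop) := exists x0, forall x, A x -> x0 <= x -> P x.

Lemma ev_and A P Q : ev A P -> ev A Q -> ev A (fun x => P x /\ Q x).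
Proof.
move=> [x1 H1] [x2 H2]; exists (Num.max x1 x2) => x Ax hx.
by split; [apply: H1 | apply: H2] => //; apply: le_trans hx;
  rewrite ?le_max lexx ?orbT.
Qed.

Lemma ev_ge A c : ev A (fun x => c <= x).
Proof. by exists c. Qed.

Lemma ev_mono A (P Q : R -> Prop) : (forall x, P x -> Q x) -> ev A P -> ev A Q.
Proof. by move=> PQ [x0 H]; exists x0 => x Ax hx; apply: PQ; apply: H. Qed.

Lemma ev_all (S : finType) A (P : S -> R -> Prop) :
  (forall j, ev A (P j)) -> ev A (fun x => forall j, P j x).
Proof.
move=> H; have [f Hf] := choice H.
exists (\sum_(j : S) `|f j|) => x Ax hx j; apply: (Hf j) => //.
apply: le_trans hx; apply: le_trans (ler_norm (f j)) _.
rewrite (bigD1 j) //= lerDl; exact: sumr_ge0.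
Qed.

Lemma ev_point A (P : R -> Prop) : (forall M, exists y, A y /\ M < y) ->
  ev A P -> exists y, A y /\ P y.
Proof.
move=> unb [x0 H]; have [y [Ay hy]] := unb x0.
by exists y; split => //; apply: H => //; exact: ltW.
Qed.

Lemma o_ev A f g : o_infty A f g <->
  (forall eps, 0 < eps -> ev A (fun x => `|f x| <= eps * g x)).
Proof. by []. Qed.

Lemma o_add A f h g : o_infty A f g -> o_infty A h g ->
  o_infty A (fun x => f x + h x) g.
Proof.
move=> Hf Hh; apply/o_ev => eps e0.
have e2 : 0 < eps / 2 by rewrite divr_gt0.
apply: ev_mono (ev_and (Hf _ e2) (Hh _ e2)) => x [h1 h2].
apply: le_trans (ler_normD _ _) _; lra.
Qed.

Lemma o_scale A f g c : (forall x, 0 <= g x) -> o_infty A f g ->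
  o_infty A (fun x => c * f x) g.
Proof.
move=> g0 Hf; apply/o_ev => eps e0.
have c1 : 0 < `|c| + 1 by rewrite ltr_pwDr // normr_ge0.
have e2 : 0 < eps / (`|c| + 1) by rewrite divr_gt0.
apply: ev_mono (Hf _ e2) => x hx; rewrite normrM.
apply: le_trans (ler_wpM2l (normr_ge0 c) hx) _.
rewrite mulrA ler_wpM2r //.
have ht : eps / (`|c| + 1) * (`|c| + 1) = eps by rewrite divfK ?gt_eqF.
have t0 : 0 <= eps / (`|c| + 1) by rewrite divr_ge0 // ltW.
have := normr_ge0 c; nra.
Qed.

Lemma o_sum (S : finType) A (f : S -> R -> R) g : (forall x, 0 <= g x) ->
  (forall j, o_infty A (f j) g) -> o_infty A (fun x => \sum_(j : S) f j x) g.
Proof.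
move=> g0 Hf; apply/o_ev => eps e0.
have c1 : 0 < #|S|%:R + 1 :> R by rewrite ltr_pwDr // ler0n.
have e2 : 0 < eps / (#|S|%:R + 1) by rewrite divr_gt0.
apply: ev_mono (ev_all (fun j => Hf j _ e2)) => x hx.
apply: le_trans (ler_norm_sum _ _ _) _.
apply: le_trans (ler_sum _ (fun j _ => hx j)) _.
rewrite sumr_const; rewrite (_ : forall z : R, z *+ #|S| = z * #|S|%:R); last by move=> z; rewrite mulr_natr.
rewrite mulrC mulrA ler_wpM2r //.
have ht : eps / (#|S|%:R + 1) * (#|S|%:R + 1) = eps by rewrite divfK ?gt_eqF.
have t0 : 0 <= eps / (#|S|%:R + 1) by rewrite divr_ge0 // ltW.
have : 0 <= #|S|%:R :> R by rewrite ler0n.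
nra.
Qed.

Lemma o_le A f h g : ev A (fun x => `|f x| <= `|h x|) -> o_infty A h g ->
  o_infty A f g.
Proof.
move=> E Hh; apply/o_ev => eps e0; apply: ev_mono (ev_and E (Hh _ e0)) => x [h1 h2].
exact: le_trans h1 h2.
Qed.

Lemma o_ext A f h g : ev A (fun x => f x = h x) -> o_infty A h g ->
  o_infty A f g.
Proof. by move=> E; apply: o_le; apply: ev_mono E => x ->. Qed.

Lemma o_mono A f g h : ev A (fun x => g x <= h x) -> o_infty A f g ->
  o_infty A f h.
Proof.
move=> E Hf; apply/o_ev => eps e0; apply: ev_mono (ev_and E (Hf _ e0)) => x [h1 h2].
apply: le_trans h2 _; rewrite ler_wpM2l //; exact: ltW.
Qed.

Lemma o_const_zero A c h g : (forall M, exists y, A y /\ M < y) ->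
  ev A (fun y => 0 < h y /\ g y <= h y) -> o_infty A (fun y => c * h y) g ->
  c = 0.
Proof.
move=> unb E Hc.
have small : forall eps, 0 < eps -> `|c| <= eps.
  move=> eps e0; have [y [Ay [[h0 gh] hy]]] := ev_point unb (ev_and E (Hc _ e0)).
  move: hy; rewrite normrM (gtr0_norm h0) => hy.
  have : `|c| * h y <= eps * h y by apply: le_trans hy _; rewrite ler_wpM2l // ltW.
  by rewrite ler_pM2r.
apply/eqP; rewrite -normr_eq0; apply/eqP.
have [hc|hc] := ltP 0 `|c|; last by apply/le_anti; rewrite hc normr_ge0.
have := small (`|c| / 2) ltac:(by rewrite divr_gt0). lra.
Qed.

Lemma pow_dec (y r s : R) : 1 <= y -> r <= s -> y `^ (- s) <= y `^ (- r).
Proof. by move=> y1 rs; apply: ler_powR => //; rewrite lerN2. Qed.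

Lemma pow_small (r eps : R) : 0 < r -> 0 < eps ->
  exists Y, 0 < Y /\ forall y, Y <= y -> y `^ (- r) <= eps.
Proof.
move=> r0 e0; exists ((eps^-1) `^ (r^-1)); split.
  by apply: powR_gt0; rewrite invr_gt0.
move=> y hy; have Y0 : 0 < (eps^-1) `^ (r^-1) by apply: powR_gt0; rewrite invr_gt0.
have y0 : 0 < y by apply: lt_le_trans hy.
have : ((eps^-1) `^ (r^-1)) `^ r <= y `^ r.
  by apply: ge0_ler_powR => //; [exact: ltW | rewrite nnegrE ltW | rewrite nnegrE ltW].
rewrite -powRrM mulVf ?gt_eqF // powRr1; last by rewrite invr_ge0 ltW.
move=> h.
rewrite powRN -lef_pV2 ?posrE ?invr_gt0 ?powR_gt0 // invrK.
exact: h.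
Qed.

Lemma powRD' (y r s : R) : 0 < y -> y `^ (r + s) = y `^ r * y `^ s.
Proof. by move=> y0; rewrite powRD // (gt_eqF y0) implybT. Qed.

Lemma Linv A (b delta : R) : 0 <= b -> 0 <= delta < 1 ->
  forall eps, 0 < eps ->
  ev A (fun y => 0 < y - b /\ (y - b)^-1 <= eps * y `^ (- delta)).
Proof.
move=> b0 /andP[d0 d1] eps e0.
have [Y [Y0 HY]] := @pow_small (1 - delta) (eps / 2) ltac:(lra) ltac:(by rewrite divr_gt0).
apply: ev_mono (ev_and (ev_ge A (2 * b + 1)) (ev_ge A Y)) => y [hy1 hy2].
have y0 : 0 < y by lra.
split; first by lra.
have h1 : (y - b)^-1 <= 2 * y^-1.
  rewrite -[2 * y^-1]invrK invfM invrK lef_pV2 ?posrE ?divr_gt0 //; lra.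
apply: le_trans h1 _.
have -> : y^-1 = y `^ (- (1 - delta)) * y `^ (- delta).
  by rewrite -powRD' // -powR_inv1 ?ltW //; congr (_ `^ _); ring.
have := HY y hy2; have := powR_ge0 y (- delta) => p1 p2.
rewrite mulrA ler_wpM2r //; lra.
Qed.

Lemma pow4 (x y r : R) : 0 < x -> x <= y -> y <= 2 * x -> 0 <= r <= 2 ->
  x `^ (- r) <= 4 * y `^ (- r).
Proof.
move=> x0 xy y2 /andP[r0 r2].
have y0 : 0 < y by apply: lt_le_trans xy.
have h1 : y `^ r <= (2 * x) `^ r.
  by apply: ge0_ler_powR => //; rewrite nnegrE; lra.
rewrite powRM in h1; [|lra|lra].
have h2 : 2 `^ r <= 4.
  have := @ler_powR R 2 ltac:(lra) r 2 r2.
  rewrite (_ : (2:R) `^ 2 = 2 ^+ 2); first by rewrite expr2; lra.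
  by rewrite powR_mulrn //; lra.
have u0 : 0 < x `^ r by apply: powR_gt0.
have v0 : 0 < y `^ r by apply: powR_gt0.
have h3 : y `^ r <= 4 * x `^ r.
  have := powR_ge0 2 r; nra.
rewrite !powRN.
have -> : 4 * (y `^ r)^-1 = (y `^ r / 4)^-1 by rewrite invf_div.
rewrite lef_pV2 ?posrE ?divr_gt0 //.
rewrite ler_pdivrMr //; lra.
Qed.

Lemma o_shift (L : set R) f (b r : R) : 0 <= b -> 0 <= r <= 2 ->
  o_infty L f (fun x => x `^ (- r)) ->
  o_infty [set y | L (y - b)] (fun y => f (y - b)) (fun y => y `^ (- r)).
Proof.
move=> b0 hr Hf; apply/o_ev => eps e0.
have e4 : 0 < eps / 4 by rewrite divr_gt0.
have [x0 H] := Hf _ e4.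
exists (`|x0| + 2 * b + 1) => y Ay hy.
have hx0 := ler_norm x0.
have hxb : x0 <= y - b by lra.
have := H (y - b) Ay hxb => h.
apply: le_trans h _.
have hx2 := normr_ge0 x0.
have p1 : 0 < y - b by lra.
have p2 : y - b <= y by lra.
have p3 : y <= 2 * (y - b) by lra.
have := @pow4 (y - b) y r p1 p2 p3 hr.
have := powR_ge0 y (- r); have := powR_ge0 (y - b) (- r).
nra.
Qed.

Lemma o_rate_mono (L : set R) f (r s : R) : r <= s ->
  o_infty L f (fun x => x `^ (- s)) -> o_infty L f (fun x => x `^ (- r)).
Proof.
move=> rs; apply: o_mono; apply: ev_mono (ev_ge L 1) => x x1.
exact: pow_dec.
Qed.

Lemma Linv_o A (b delta : R) : 0 <= b -> 0 <= delta < 1 ->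
  o_infty A (fun y => (y - b)^-1) (fun y => y `^ (- delta)).
Proof.
move=> b0 hd; apply/o_ev => eps e0.
apply: ev_mono (Linv A b0 hd e0) => y [h1 h2].
by rewrite ger0_norm // invr_ge0 ltW.
Qed.

Lemma Linv2 A (b delta : R) : 0 <= b -> 0 <= delta < 1 ->
  o_infty A (fun y => (y - b)^-1 * y^-1) (fun y => y `^ (- (1 + delta))).
Proof.
move=> b0 hd; apply/o_ev => eps e0.
apply: ev_mono (ev_and (Linv A b0 hd e0) (ev_ge A (b + 1))) => y [[h1 h2] h3].
have y0 : 0 < y by lra.
have i1 : 0 <= (y - b)^-1 by rewrite invr_ge0 ltW.
have i2 : 0 <= y^-1 by rewrite invr_ge0 ltW.
rewrite opprD powRD' //; rewrite powR_inv1; last exact: ltW.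
rewrite ger0_norm; last exact: mulr_ge0.
nra.
Qed.

Lemma o_zero_inv A c (b delta : R) :
  (forall M, exists y, A y /\ M < y) -> 0 <= b -> 0 <= delta ->
  o_infty A (fun y => c * (y - b)^-1) (fun y => y `^ (- (1 + delta))) -> c = 0.
Proof.
move=> unb b0 d0 H; apply: (o_const_zero unb _ H).
apply: ev_mono (ev_ge A (b + 1)) => y hy.
have y0 : 0 < y by lra.
have yb : 0 < y - b by lra.
split; first by rewrite invr_gt0.
apply: le_trans (_ : y `^ (- 1) <= _).
  apply: pow_dec; lra.
rewrite powR_inv1; last exact: ltW.
rewrite lef_pV2 ?posrE //; lra.
Qed.

Lemma o_zero_one A c (delta : R) :
  (forall M, exists y, A y /\ M < y) -> 0 <= delta ->
  o_infty A (fun y => c * 1) (fun y => y `^ (- delta)) -> c = 0.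
Proof.
move=> unb d0 H; apply: (o_const_zero unb _ H).
apply: ev_mono (ev_ge A 1) => y hy; split; first exact: ltr01.
apply: le_trans (pow_dec hy d0) _.
by rewrite oppr0 powRr0.
Qed.

End Asym.

Lemma main_gen (R : realType) (S : finType) (Sigma : set (R * S))
  (K : @trkernel R S) (p Cp : R) (q gamma dd : S -> S -> R)
  (d e t2 a : S -> R) (delta : R) :
  kernel_on Sigma K -> unbounded_lines Sigma -> 2 < p ->
  pmoment_bound Sigma K p Cp ->
  (forall i, \sum_(j : S) q i j = 1) -> (forall i, 0 <= a i) ->
  (forall i, d i + \sum_(j : S) (a j - a i) * q i j = 0) ->
  0 <= delta < 1 ->
  QG_rate Sigma K q gamma delta -> DG_rate Sigma K d e t2 dd delta ->
  conclusion Sigma K a e t2 q gamma dd delta.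
Proof.
move=> hK unb hp hmom hq a0 ha hdel HQ HD i.
have /andP[d0 d1] := hdel.
set A := tline Sigma a i.
have ai0 := a0 i.
have unbA : forall M, exists y, A y /\ M < y.
  move=> M; have [x [Lx Mx]] := unb i M.
  exists (x + a i); split; last by lra.
  by rewrite /A /tline /= addrK.
have g0 : forall r (y : R), 0 <= y `^ r by move=> r y; exact: powR_ge0.
have F1 : (fun x : R => x `^ (-1 - delta)) = (fun x => x `^ (- (1 + delta))).
  by apply: funext => x; rewrite opprD.
have hr1 : 0 <= 1 + delta <= 2 by apply/andP; split; lra.
have hr0 : 0 <= delta <= 2 by apply/andP; split; lra.
have [HDmu [HDs HDm]] := HD i.
set x_ := fun y : R => y - a i.
have Sq : forall j, o_infty A
    (fun y => qx K (y - a i) i j - q i j - gamma i j / (y - a i))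
    (fun y => y `^ (- (1 + delta))).
  move=> j; have := HQ i j; rewrite F1 => H; exact: (o_shift ai0 hr1 H).
have Smu : o_infty A (fun y => mux K (y - a i) i - d i - e i / (y - a i))
    (fun y => y `^ (- (1 + delta))).
  move: HDmu; rewrite F1 => H; exact: (o_shift ai0 hr1 H).
have Ss : o_infty A (fun y => sig2x K (y - a i) i - t2 i)
    (fun y => y `^ (- delta)).
  exact: (o_shift ai0 hr0 HDs).
have Sm : forall j, o_infty A (fun y => muijx K (y - a i) i j - dd i j)
    (fun y => y `^ (- delta)).
  move=> j; exact: (o_shift ai0 hr0 (HDm j)).
have sumg : \sum_(j : S) gamma i j = 0.
  apply: (o_zero_inv unbA ai0 d0).
  apply: o_ext (o_scale (-1) (g0 _) (o_sum (g0 _) Sq)).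
  exists 0 => y Ay _.
  rewrite !sumrB -mulr_suml (@sum_qx _ _ Sigma K hK _ _ Ay) hq; ring.
have sumdd : \sum_(j : S) dd i j = d i.
  apply/eqP; rewrite -subr_eq0; apply/eqP.
  apply: (o_zero_one unbA d0).
  have H1 := o_scale (-1) (g0 _) (o_sum (g0 _) Sm).
  have dd1 : delta <= 1 + delta by lra.
  have H2 := o_rate_mono dd1 Smu.
  have H3 := o_scale (e i) (g0 _) (Linv_o A ai0 hdel).
  apply: o_ext (o_add (o_add H1 H2) H3).
  exists 0 => y Ay _.
  rewrite sumrB /mux -/(muijx K _ _ _); ring.
split.
- rewrite F1.
  have H1 := o_sum (g0 _) (fun j => o_scale (a j - a i) (g0 _) (Sq j)).
  have H2 := o_scale (c_coef e a gamma i * a i) (g0 _) (Linv2 A ai0 hdel).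
  apply: o_ext (o_add (o_add Smu H1) H2).
  exists (a i + 1) => y Ay hy.
  have y0 : y != 0 by apply/eqP; lra.
  have x0 : y - a i != 0 by apply/eqP; lra.
  rewrite (@mutilde_eq _ _ Sigma K p Cp hK hp hmom a y i Ay).
  have E : \sum_(j : S) (a j - a i) * (qx K (y - a i) i j - q i j - gamma i j / (y - a i))
    = \sum_(j : S) (a j - a i) * qx K (y - a i) i j
      - \sum_(j : S) (a j - a i) * q i j
      - (\sum_(j : S) a j * gamma i j - a i * \sum_(j : S) gamma i j) * (y - a i)^-1.
    rewrite mulr_sumr -[(\sum_(j : S) a j * gamma i j) - _]sumrB mulr_suml -!sumrB; apply: eq_bigr => j _; ring.
  rewrite E sumg /c_coef.
  have hd := hdel; move: (ha i) => hi.
  have -> : d i = - \sum_(j : S) (a j - a i) * q i j by lra.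
  field; apply/andP; split => //.
- have dd1 : delta <= 1 + delta by lra.
  have H2 := o_scale 2 (g0 _) (o_sum (g0 _) (fun j => o_scale (a j - a i) (g0 _) (Sm j))).
  have H3 := o_sum (g0 _) (fun j => o_scale ((a j - a i) ^+ 2) (g0 _) (o_rate_mono dd1 (Sq j))).
  have H4 := o_scale (\sum_(j : S) (a j - a i) ^+ 2 * gamma i j) (g0 _) (Linv_o A ai0 hdel).
  apply: o_ext (o_add (o_add (o_add Ss H2) H3) H4).
  exists (a i + 1) => y Ay hy.
  have x0 : y - a i != 0 by apply/eqP; lra.
  rewrite (@sig2tilde_eq _ _ Sigma K p Cp hK hp hmom a y i Ay).
  have EU1 : \sum_(j : S) (a j - a i) * (muijx K (y - a i) i j - dd i j) =
    \sum_(j : S) (a j - a i) * muijx K (y - a i) i j - \sum_(j : S) (a j - a i) * dd i j.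
    by rewrite -sumrB; apply: eq_bigr => j _; ring.
  have EU2 : \sum_(j : S) (a j - a i) ^+ 2 *
      (qx K (y - a i) i j - q i j - gamma i j / (y - a i)) =
    \sum_(j : S) (a j - a i) ^+ 2 * qx K (y - a i) i j
    - \sum_(j : S) (a j - a i) ^+ 2 * q i j
    - (\sum_(j : S) (a j - a i) ^+ 2 * gamma i j) * (y - a i)^-1.
    by rewrite mulr_suml -!sumrB; apply: eq_bigr => j _; ring.
  have EDD : \sum_(j : S) (a j - a i) * dd i j =
    \sum_(j : S) a j * dd i j - a i * \sum_(j : S) dd i j.
    by rewrite mulr_sumr -sumrB; apply: eq_bigr => j _; ring.
  have EQ2 : \sum_(j : S) (a j - a i) ^+ 2 * q i j =
    \sum_(j : S) (a j ^+ 2 - a i ^+ 2) * q i j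
    - 2 * a i * \sum_(j : S) (a j - a i) * q i j.
    by rewrite mulr_sumr -sumrB; apply: eq_bigr => j _; ring.
  rewrite EU1 EU2 EDD EQ2 sumdd /s2_coef.
  move: (ha i) => hi.
  have -> : d i = - \sum_(j : S) (a j - a i) * q i j by lra.
  field; exact: x0.
Qed.

Lemma Fexp (R : realType) (t : R) :
  (fun x : R => x `^ (-1 - t)) = (fun x => x `^ (- (1 + t))).
Proof. by apply: funext => x; rewrite opprD. Qed.

Lemma QG_mono (R : realType) (S : finType) (Sigma : set (R * S)) (K : @trkernel R S)
  q gamma (r s : R) : r <= s -> QG_rate Sigma K q gamma s -> QG_rate Sigma K q gamma r.
Proof.
move=> rs H i j; have := H i j; rewrite /QG_rate Fexp Fexp => H1.
apply: o_rate_mono H1; lra.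
Qed.

Lemma DG_mono (R : realType) (S : finType) (Sigma : set (R * S)) (K : @trkernel R S)
  d e t2 dd (r s : R) : r <= s -> DG_rate Sigma K d e t2 dd s ->
  DG_rate Sigma K d e t2 dd r.
Proof.
move=> rs H i; have [H1 [H2 H3]] := H i; split; [|split].
- move: H1; rewrite Fexp Fexp => H1; apply: o_rate_mono H1; lra.
- exact: o_rate_mono H2.
- by move=> j; apply: o_rate_mono (H3 j).
Qed.

Theorem lemma5p1 (R : realType) (S : finType) (Sigma : set (R * S))
  (K : @trkernel R S) (p Cp : R) (q gamma dd : S -> S -> R)
  (pi d e t2 a : S -> R) :
  (0 < #|S|)%N ->
  in_Rplus_S Sigma -> locally_finite Sigma ->
  kernel_on Sigma K -> irreducible_chain Sigma K -> unbounded_lines Sigma ->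
  2 < p -> pmoment_bound Sigma K p Cp ->
  stochastic q -> irreducible_matrix q -> stationary q pi ->
  QG_rate Sigma K q gamma 0 ->
  DG_rate Sigma K d e t2 dd 0 -> DG_struct pi d t2 ->
  (forall i, 0 <= a i) ->
  (forall i, d i + \sum_(j : S) (a j - a i) * q i j = 0) ->
  conclusion Sigma K a e t2 q gamma dd 0 /\
  (forall delta2 delta3 : R, 0 < delta2 < 1 -> 0 < delta3 < 1 ->
     QG_rate Sigma K q gamma delta3 -> DG_rate Sigma K d e t2 dd delta2 ->
     conclusion Sigma K a e t2 q gamma dd (Num.min delta2 delta3)).
Proof.
move=> _ _ _ hK _ unb hp hmom [_ hq] _ _ HQ HD _ a0 ha.
split.
  apply: (@main_gen _ _ Sigma K p Cp q gamma dd d e t2 a 0 hK unb hp hmom hq a0 ha) => //.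
  by rewrite lexx ltr01.
move=> d2 d3 /andP[d20 d21] /andP[d30 d31] HQ3 HD2.
have m2 : Num.min d2 d3 <= d2 by rewrite ge_min lexx.
have m3 : Num.min d2 d3 <= d3 by rewrite ge_min lexx orbT.
have m0 : 0 <= Num.min d2 d3 by rewrite le_min !ltW.
apply: (@main_gen _ _ Sigma K p Cp q gamma dd d e t2 a _ hK unb hp hmom hq a0 ha).
- apply/andP; split => //; apply: le_lt_trans m2 d21.
- exact: QG_mono m3 HQ3.
- exact: DG_mono m2 HD2.
Qed.
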